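(* Let $N$ be a society, $D$ an $N$-coalition, $\nabla$ an ES basic fusion operator satisfying (ESF-SD), (ESF-P) and (ESF-I), and $w\ne w'$ interpretations. Suppose $E_{w,w'},E_{w'}\in\mathcal E$ satisfy $[\![B(E_{w,w'})]\!]=\{w,w'\}$, $[\![B(E_{w'})]\!]=\{w'\}$, and $D$ is locally decisive for $E_{w,w'}$ against $E_{w'}$. Then for every interpretation $w''\notin\{w,w'\}$ and every $E_{w',w''}\in\mathcal E$ with $[\![B(E_{w',w''})]\!]=\{w',w''\}$, $D$ is decisive for $E_{w',w''}$ against $E_{w'}$.
   Context: Setting: epistemic space $(\mathcal E,B,\mathcal L_{\mathcal P})$ ($\mathcal E$ nonempty, $B:\mathcal E\to$ propositional formulas over finite $\mathcal P$, $|\mathcal P|\ge2$, image modulo equivalence exactly the consistent formulas; $[\![\phi]\!]$ models; $\varphi_M$ a formula with models exactly $M$); agents: well-ordered set $\mathcal S$; society: nonempty finite $N\subseteq\mathcal S$; $N$-profile $\Phi:N\to\mathcal E$, $E_i=\Phi(i)$, identified with $E_i$ if $N=\{i\}$; profiles on $\{i_1<\dots<i_n\}$, $\{j_1<\dots<j_m\}$ equivalent if $n=m$ and entries coincide position-wise. ES basic fusion operator: a map $\nabla(\Phi,E)\in\mathcal E$ with (ESF1) $B(\nabla(\Phi,E))\vdash B(E)$; (ESF2) equivalent profiles and $B(E)\equiv B(E')$ give equivalent $B(\nabla)$; (ESF3) if $B(E)\equiv B(E')\wedge B(E'')$ then $B(\nabla(\Phi,E'))\wedge B(E'')\vdash B(\nabla(\Phi,E))$;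 (ESF4) if moreover $B(\nabla(\Phi,E'))\wedge B(E'')\nvdash\bot$ then $B(\nabla(\Phi,E))\vdash B(\nabla(\Phi,E'))\wedge B(E'')$. (ESF-SD): for every agent $i$, interpretations $w_1,w_2,w_3$ and $E_{w_1,w_2},E_{w_2,w_3}$ with $[\![B(E_{w_1,w_2})]\!]=\{w_1,w_2\}$, $[\![B(E_{w_2,w_3})]\!]=\{w_2,w_3\}$, there exist $i$-profiles realising each of: (i) $B(\nabla(E_i,E_{w_1,w_2}))\equiv\varphi_{w_1,w_2}$ and $B(\nabla(E_i,E_{w_2,w_3}))\equiv\varphi_{w_2,w_3}$; (ii) $\equiv\varphi_{w_1,w_2}$ and $\equiv\varphi_{w_2}$; (iii) $\equiv\varphi_{w_1}$ and $\equiv\varphi_{w_2,w_3}$; (iv) $\equiv\varphi_{w_1}$ and $\equiv\varphi_{w_2}$. (ESF-P): for every $N$, $N$-profile $\Phi$, $E,E'$: if $\bigwedge_{i\in N}B(\nabla(E_i,E))\nvdash\bot$ and $B(\nabla(E_i,E))\wedge B(E')\vdash\bot$ for all $i\in N$ then $B(\nabla(\Phi,E))\wedge B(E')\vdash\bot$. (ESF-I): for every $N$, $N$-profiles $\Phi,\Phi'$, $E$: if for every $E'$ with $B(E')\vdash B(E)$, $B(\nabla(E_j,E'))\equiv B(\nabla(E'_j,E'))$ for all $j\in N$, then $B(\nabla(\Phi,E))\equiv B(\nabla(\Phi',E))$. An $N$-coalition is a subset $D\subseteq N$. $D$ is locally decisive for $E$ against $E'$ if for every $N$-profile $\Phi$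 with (i) $B(\nabla(E_i,E))\wedge B(E')\vdash\bot$ for all $i\in D$, (ii) $B(\nabla(E_j,E))\equiv B(E')$ for all $j\in N\setminus D$, (iii) $\bigwedge_{i\in D}B(\nabla(E_i,E))\nvdash\bot$, we have $B(\nabla(\Phi,E))\wedge B(E')\vdash\bot$. $D$ is decisive for $E$ against $E'$ if the same conclusion holds for every $N$-profile satisfying only (i) and (iii). *)

(* Defs.v *)
From mathcomp Require Import all_boot.
Set Implicit Arguments. Unset Strict Implicit. Unset Printing Implicit Defensive.

Inductive form (P : Type) : Type :=
| FVar of P
| FTop
| FBot
| FNeg of form P
| FAnd of form P & form P
| FOr of form P & form P
| FImp of form P & form P.
Arguments FTop {P}. Arguments FBot {P}.

Definition interp (P : finType) := {ffun P -> bool}.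

Fixpoint eval (P : finType) (w : interp P) (f : form P) : bool :=
  match f with
  | FVar p => w p
  | FTop => true
  | FBot => false
  | FNeg g => ~~ eval w g
  | FAnd g h => eval w g && eval w h
  | FOr g h => eval w g || eval w h
  | FImp g h => eval w g ==> eval w h
  end.

Definition models (P : finType) (f : form P) : {set interp P} :=
  [set w | eval w f].

Definition entails (P : finType) (f g : form P) : Prop := models f \subset models g.
Definition equiv (P : finType) (f g : form P) : Prop := models f = models g.
Definition consistent (P : finType) (f : form P) : Prop := ~ entails f FBot.

Definition bigAnd (P : finType) (s : seq (form P)) : form P := foldr (@FAnd P) FTop s.

Definition epistemic_space (P : finType) (E : Type) (B : E -> form P) : Prop :=
  inhabited E /\
  (forall e, consistent (B e)) /\
  (forall f : form P, consistent f -> exists e, equiv (B e) f).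

Definition strict_well_order (S : Type) (lt : S -> S -> bool) : Prop :=
  (forall x, ~~ lt x x) /\
  (forall x y z, lt x y -> lt y z -> lt x z) /\
  (forall x y, x <> y -> lt x y \/ lt y x) /\
  well_founded (fun x y => lt x y).

(* A society is a nonempty finite set of agents, represented as the list of its
   members in increasing order {i_1 < ... < i_n}. *)
Definition society (S : eqType) (lt : rel S) (N : seq S) : Prop :=
  N <> [::] /\ sorted lt N.

(* An N-profile is represented by a function Phi : S -> E, of which only the
   values on N matter.  The profile on {i} with entry Phi i is  nab [:: i] Phi.
   Two profiles (N,Phi), (N',Phi') are equivalent iff  map Phi N = map Phi' N'
   (same size and position-wise equal entries). *)
Section Operator.
Variables (P : finType) (E : Type) (B : E -> form P) (S : eqType) (lt : rel S).
Variable nab : seq S -> (S -> E) -> E -> E.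

Definition ESF_basic : Prop :=
  (forall N Phi e, society lt N -> entails (B (nab N Phi e)) (B e)) /\
  (forall N N' Phi Phi' e e', society lt N -> society lt N' ->
     map Phi N = map Phi' N' -> equiv (B e) (B e') ->
     equiv (B (nab N Phi e)) (B (nab N' Phi' e'))) /\
  (forall N Phi e e' e'', society lt N ->
     equiv (B e) (FAnd (B e') (B e'')) ->
     entails (FAnd (B (nab N Phi e')) (B e'')) (B (nab N Phi e))) /\
  (forall N Phi e e' e'', society lt N ->
     equiv (B e) (FAnd (B e') (B e'')) ->
     consistent (FAnd (B (nab N Phi e')) (B e'')) ->
     entails (B (nab N Phi e)) (FAnd (B (nab N Phi e')) (B e''))).

Definition ESF_SD : Prop :=
  forall (i : S) (w1 w2 w3 : interp P) (e12 e23 : E),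
    w1 != w2 -> w2 != w3 -> w1 != w3 ->
    models (B e12) = [set w1; w2] -> models (B e23) = [set w2; w3] ->
    (exists Phi : S -> E,
        models (B (nab [:: i] Phi e12)) = [set w1; w2] /\
        models (B (nab [:: i] Phi e23)) = [set w2; w3]) /\
    (exists Phi : S -> E,
        models (B (nab [:: i] Phi e12)) = [set w1; w2] /\
        models (B (nab [:: i] Phi e23)) = [set w2]) /\
    (exists Phi : S -> E,
        models (B (nab [:: i] Phi e12)) = [set w1] /\
        models (B (nab [:: i] Phi e23)) = [set w2; w3]) /\
    (exists Phi : S -> E,
        models (B (nab [:: i] Phi e12)) = [set w1] /\
        models (B (nab [:: i] Phi e23)) = [set w2]).

Definition ESF_P : Prop :=
  forall (N : seq S) (Phi : S -> E) (e e' : E), society lt N ->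
    consistent (bigAnd [seq B (nab [:: i] Phi e) | i <- N]) ->
    (forall i, i \in N -> entails (FAnd (B (nab [:: i] Phi e)) (B e')) FBot) ->
    entails (FAnd (B (nab N Phi e)) (B e')) FBot.

Definition ESF_I : Prop :=
  forall (N : seq S) (Phi Phi' : S -> E) (e : E), society lt N ->
    (forall e' : E, entails (B e') (B e) ->
       forall j, j \in N -> equiv (B (nab [:: j] Phi e')) (B (nab [:: j] Phi' e'))) ->
    equiv (B (nab N Phi e)) (B (nab N Phi' e)).

Definition locally_decisive (N D : seq S) (e e' : E) : Prop :=
  forall Phi : S -> E,
    (forall i, i \in D -> entails (FAnd (B (nab [:: i] Phi e)) (B e')) FBot) ->
    (forall j, j \in N -> j \notin D -> equiv (B (nab [:: j] Phi e)) (B e')) ->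
    consistent (bigAnd [seq B (nab [:: i] Phi e) | i <- D]) ->
    entails (FAnd (B (nab N Phi e)) (B e')) FBot.

Definition decisive (N D : seq S) (e e' : E) : Prop :=
  forall Phi : S -> E,
    (forall i, i \in D -> entails (FAnd (B (nab [:: i] Phi e)) (B e')) FBot) ->
    consistent (bigAnd [seq B (nab [:: i] Phi e) | i <- D]) ->
    entails (FAnd (B (nab N Phi e)) (B e')) FBot.
End Operator.

(* Main.v *)
Require Import Defs.
From mathcomp Require Import all_boot.
From Stdlib Require Import ClassicalEpsilon.
Set Implicit Arguments. Unset Strict Implicit. Unset Printing Implicit Defensive.

Lemma models_FAnd (P : finType) (f g : form P) : models (FAnd f g) = models f :&: models g.
Proof. by apply/setP => x; rewrite !inE. Qed.

Lemma models_FBot (P : finType) : models (@FBot P) = set0.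
Proof. by apply/setP => x; rewrite !inE. Qed.

Lemma entails0 (P : finType) (f : form P) : entails f FBot <-> models f = set0.
Proof. by rewrite /entails models_FBot subset0; split => /eqP. Qed.

Lemma eval_bigAnd (P : finType) (v : interp P) s : eval v (bigAnd s) = all (eval v) s.
Proof. by elim: s => //= f s ->. Qed.

Lemma sub1_eq (T : finType) (A : {set T}) t : A != set0 -> A \subset [set t] -> A = [set t].
Proof.
move=> /set0Pn [x xA] sub; apply/setP => y; rewrite inE; apply/idP/eqP => [H|->].
  by have := subsetP sub y H; rewrite inE => /eqP.
by have := subsetP sub x xA; rewrite inE => /eqP <-.
Qed.

Definition lit (P : finType) (w : interp P) (p : P) : form P :=
  if w p then FVar p else FNeg (FVar p).
Definition charf (P : finType) (w : interp P) : form P := bigAnd [seq lit w p | p <- enum P].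
Definition setf (P : finType) (M : {set interp P}) : form P :=
  foldr (fun w f => FOr (charf w) f) FBot (enum M).

Lemma eval_charf (P : finType) (v w : interp P) : eval v (charf w) = (v == w).
Proof.
rewrite eval_bigAnd all_map; apply/allP/eqP => [H|->]; last first.
  by move=> p _; rewrite /preim /= /lit; case Ew: (w p) => /=; rewrite ?Ew.
apply/ffunP => p; have := H p; rewrite mem_enum /preim /= /lit => /(_ isT).
by case Ew: (w p); case Ev: (v p) => /=; rewrite ?Ew ?Ev.
Qed.

Lemma models_setf (P : finType) (M : {set interp P}) : models (setf M) = M.
Proof.
apply/setP => v; rewrite inE /setf -mem_enum; elim: (enum M) => //= w s ->.
by rewrite eval_charf in_cons.
Qed.

Lemma ne0 (P : finType) (E : Type) (B : E -> form P) (hES : epistemic_space B) x :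
  models (B x) != set0.
Proof.
case: hES => _ [hc _]; apply/negP => /eqP H; apply: (hc x).
by rewrite /entails H sub0set.
Qed.

Lemma exE (P : finType) (E : Type) (B : E -> form P) (hES : epistemic_space B)
  (M : {set interp P}) : M != set0 -> exists e, models (B e) = M.
Proof.
move=> hM; case: hES => _ [_ hc]; case: (hc (setf M)).
  by move/entails0; rewrite models_setf => /eqP; rewrite (negbTE hM).
by move=> e He; exists e; rewrite He models_setf.
Qed.

Lemma soc1 (S : eqType) (lt : rel S) (i : S) : society lt [:: i].
Proof. by split. Qed.

Lemma subres (P : finType) (E : Type) (B : E -> form P) (S : eqType) (lt : rel S) nab
  (hb : ESF_basic B lt nab) N (hN : society lt N) Phi e :
  models (B (nab N Phi e)) \subset models (B e).
Proof. by case: hb => h1 _; apply: h1. Qed.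

Lemma restrict (P : finType) (E : Type) (B : E -> form P) (S : eqType) (lt : rel S) nab
  (hb : ESF_basic B lt nab) N (hN : society lt N) Phi e eT :
  models (B e) \subset models (B eT) ->
  models (B (nab N Phi eT)) :&: models (B e) != set0 ->
  models (B (nab N Phi e)) = models (B (nab N Phi eT)) :&: models (B e).
Proof.
move=> hs hne; case: hb => _ [_ [h3 h4]].
have heq : Defs.equiv (B e) (FAnd (B eT) (B e)) by rewrite /Defs.equiv models_FAnd (setIidPr hs).
apply/eqP; rewrite eqEsubset; apply/andP; split.
  have := h4 N Phi e eT e hN heq; rewrite /entails models_FAnd; apply.
  by move/entails0; rewrite models_FAnd => /eqP; rewrite (negbTE hne).
by have := h3 N Phi e eT e hN heq; rewrite /entails models_FAnd.
Qed.
Ltac bsub a b c := let x := fresh "x" in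
  apply/subsetP => x; rewrite !inE; case: (x == a); case: (x == b); case: (x == c).
Ltac bset a b c := let x := fresh "x" in
  apply/setP => x; rewrite !inE; case: (x == a); case: (x == b); case: (x == c).

Lemma trans_lem (P : finType) (E : Type) (B : E -> form P) (hES : epistemic_space B)
  (S : eqType) (lt : rel S) nab (hb : ESF_basic B lt nab) N (hN : society lt N) Phi
  (a b c : interp P) eab ebc eac eT :
  a != b -> b != c -> a != c ->
  models (B eab) = [set a; b] -> models (B ebc) = [set b; c] ->
  models (B eac) = [set a; c] -> models (B eT) = [set a; b; c] ->
  models (B (nab N Phi ebc)) = [set b] ->
  (models (B (nab N Phi eab)) = [set a] \/ models (B (nab N Phi eab)) = [set a; b]) ->
  models (B (nab N Phi eac)) = [set a].
Proof.
move=> ab bc ac hab hbc hac hT rbc rab.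
set R := models (B (nab N Phi eT)).
have RT : R \subset [set a; b; c] by rewrite -hT; exact: (subres hb hN).
have Rne : R != set0 by apply: ne0.
have sab : models (B eab) \subset models (B eT) by rewrite hab hT; bsub a b c.
have sbc : models (B ebc) \subset models (B eT) by rewrite hbc hT; bsub a b c.
have sac : models (B eac) \subset models (B eT) by rewrite hac hT; bsub a b c.
have nc : c \notin R.
  apply/negP => cR.
  have ne : R :&: models (B ebc) != set0.
    by apply/set0Pn; exists c; rewrite inE cR hbc !inE eqxx orbT.
  have := restrict hb hN sbc ne; rewrite rbc => /setP /(_ c).
  by rewrite in_setI cR hbc !inE eqxx orbT eq_sym (negbTE bc).

have aR : a \in R.
  have ne : R :&: models (B eab) != set0.
    case/set0Pn: Rne => x xR; apply/set0Pn; exists x; rewrite inE xR hab.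
    have := subsetP RT x xR; rewrite !inE; case: (x == a); case: (x == b) => //=; rewrite ?orbF => /eqP xc.
    by move: nc; rewrite -xc xR.
  have E1 := restrict hb hN sab ne.
  have : a \in models (B (nab N Phi eab)) by case: rab => ->; rewrite !inE eqxx.
  by rewrite E1 inE => /andP[].
have ne : R :&: models (B eac) != set0.
  by apply/set0Pn; exists a; rewrite inE aR hac !inE eqxx.
rewrite (restrict hb hN sac ne) hac.
apply/setP => x; rewrite in_setI in_set2 in_set1; case: eqP => [->|xa]; first by rewrite aR.
case: eqP => [xc|] //=; last by rewrite andbF.
by rewrite xc (negbTE nc).
Qed.

Lemma determ (P : finType) (E : Type) (B : E -> form P) (hES : epistemic_space B)
  (S : eqType) (lt : rel S) nab (hb : ESF_basic B lt nab) N (hN : society lt N) F1 F2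
  (a b : interp P) e e' :
  a != b -> models (B e) = [set a; b] ->
  models (B (nab N F1 e)) = models (B (nab N F2 e)) ->
  models (B e') \subset models (B e) ->
  models (B (nab N F1 e')) = models (B (nab N F2 e')).
Proof.
move=> ab he E12 hs.
case: (boolP (models (B (nab N F1 e)) :&: models (B e') != set0)) => ne.
  have ne2 := ne; rewrite E12 in ne2.
  by rewrite (restrict hb hN hs ne) (restrict hb hN hs ne2) E12.
case/set0Pn: (ne0 hES (nab N F1 e)) => r rR.
have rab : r \in [set a; b] by rewrite -he; exact: (subsetP (subres hb hN _ _) _ rR).
have sub : models (B e') \subset [set if r == a then b else a].
  apply/subsetP => x xX.
  have xab : x \in [set a; b] by rewrite -he; exact: (subsetP hs _ xX).
  have xr : x != r.
    apply/eqP => xr; move: ne; rewrite negbK => /eqP/setP/(_ x).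
    by rewrite in_setI xX xr rR inE.
  move: rab xab xr; rewrite !in_set2 in_set1.
  case/orP => /eqP ->; rewrite ?eqxx; case/orP => /eqP ->; rewrite ?eqxx //.
  by move=> _; rewrite [b == a]eq_sym (negbTE ab).
have s1 : models (B (nab N F1 e')) \subset models (B e') by exact: (subres hb hN _ _).
have s2 : models (B (nab N F2 e')) \subset models (B e') by exact: (subres hb hN _ _).
rewrite (sub1_eq (ne0 hES _) (subset_trans s1 sub)).
by rewrite (sub1_eq (ne0 hES _) (subset_trans s2 sub)).
Qed.
Lemma disj1 (T : finType) (a b : T) : a != b -> [set a] :&: [set b] = set0.
Proof.
move=> ab; apply/setP => x; rewrite in_setI !in_set1 in_set0.
by apply/negP => /andP[/eqP -> /eqP]; apply/eqP.
Qed.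

Theorem proposition15
  (P : finType) (hP : 1 < #|P|)
  (E : Type) (B : E -> form P) (hES : epistemic_space B)
  (S : eqType) (lt : rel S) (hS : strict_well_order lt)
  (nab : seq S -> (S -> E) -> E -> E)
  (h_basic : ESF_basic B lt nab) (h_SD : ESF_SD B nab)
  (h_P : ESF_P B lt nab) (h_I : ESF_I B lt nab)
  (N D : seq S) (hN : society lt N) (hD : {subset D <= N})
  (w w' : interp P) (hww' : w != w')
  (Eww' Ew' : E)
  (hEww' : models (B Eww') = [set w; w'])
  (hEw' : models (B Ew') = [set w'])
  (hloc : locally_decisive B nab N D Eww' Ew') :
  forall (w'' : interp P), w'' \notin [set w; w'] ->
  forall Ew'w'' : E, models (B Ew'w'') = [set w'; w''] ->
  decisive B nab N D Ew'w'' Ew'.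
Proof.
move=> w'' hw'' Ew'w'' hE2 Phi hi hcons.
have hb := h_basic.
move: hw''; rewrite !inE negb_or => /andP[n1 n2].
have ww'' : w != w'' by rewrite eq_sym.
have w'w'' : w' != w'' by rewrite eq_sym.
have [Ew hEw] : exists e, models (B e) = [set w].
  by apply: (exE hES); apply/set0Pn; exists w; rewrite inE.
have [Ewwpp hEwwpp] : exists e, models (B e) = [set w; w''].
  by apply: (exE hES); apply/set0Pn; exists w; rewrite !inE eqxx.
have [ET hET] : exists e, models (B e) = [set w; w'; w''].
  by apply: (exE hES); apply/set0Pn; exists w; rewrite !inE eqxx.
pose Good i (F : S -> E) :=
  models (B (nab [:: i] F Ew'w'')) = models (B (nab [:: i] Phi Ew'w'')) /\
  models (B (nab [:: i] F Ewwpp)) = [set w''] /\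
  models (B (nab [:: i] F Eww')) = (if i \in D then [set w] else [set w']).
have hG : forall i, exists F, Good i F.
  move=> i; have hs := soc1 lt i.
  set X := models (B (nab [:: i] Phi Ew'w'')).
  have Xs : X \subset [set w'; w''] by rewrite -hE2; exact: (subres hb hs _ _).
  have Xn := ne0 hES (nab [:: i] Phi Ew'w'').
  case iD: (i \in D); rewrite /Good iD.
  - have X1 : X = [set w''].
      move/entails0: (hi i iD); rewrite models_FAnd hEw' => H.
      apply: sub1_eq Xn _; apply/subsetP => x xX.
      have := subsetP Xs x xX; rewrite !inE; case/orP => // /eqP xw'.
      by move: H => /setP /(_ x); rewrite in_setI xX xw' in_set1 eqxx in_set0.
    case: (h_SD i w'' w w' Ewwpp Eww' n1 hww' n2) => //.
      by rewrite hEwwpp setUC.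
    move=> _ [_ [_ [F [h1 h2]]]].
    exists F; split; last by split.
    rewrite -/X X1; apply: (trans_lem hES hb hs n1 hww' n2 (eab := Ewwpp) (ebc := Eww') (eT := ET)) => //.
    + by rewrite hEwwpp setUC.
    + by rewrite hE2 setUC.
    + by rewrite hET; bset w w' w''.
    + by left.
  - have w'w : w' != w by rewrite eq_sym.
    case: (boolP (w' \in X)) => h1; case: (boolP (w'' \in X)) => h2.
    + have X1 : X = [set w'; w''].
        apply/eqP; rewrite eqEsubset Xs; apply/subsetP => x; rewrite in_set2.
        by case/orP => /eqP ->.
      case: (h_SD i w' w'' w Ew'w'' Ewwpp w'w'' n1 w'w hE2); first by rewrite hEwwpp setUC.
      move=> _ [[F [g1 g2]] _].
      exists F; split; first by rewrite g1 -/X X1.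
      split => //.
      apply: (trans_lem hES hb hs w'w'' n1 w'w (eab := Ew'w'') (ebc := Ewwpp) (eT := ET)) => //.
      * by rewrite hEwwpp setUC.
      * by rewrite hEww' setUC.
      * by rewrite hET; bset w w' w''.
      * by right.
    + have X1 : X = [set w'].
        apply: sub1_eq Xn _; apply/subsetP => x xX.
        have := subsetP Xs x xX; rewrite !inE; case/orP => // /eqP xw''.
        by move: h2; rewrite -xw'' xX.
      case: (h_SD i w' w'' w Ew'w'' Ewwpp w'w'' n1 w'w hE2); first by rewrite hEwwpp setUC.
      move=> _ [_ [_ [F [g1 g2]]]].
      exists F; split; first by rewrite g1 -/X X1.
      split => //.
      apply: (trans_lem hES hb hs w'w'' n1 w'w (eab := Ew'w'') (ebc := Ewwpp) (eT := ET)) => //.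
      * by rewrite hEwwpp setUC.
      * by rewrite hEww' setUC.
      * by rewrite hET; bset w w' w''.
      * by left.
    + have X1 : X = [set w''].
        apply: sub1_eq Xn _; apply/subsetP => x xX.
        have := subsetP Xs x xX; rewrite !inE; case/orP => // /eqP xw'.
        by move: h1; rewrite -xw' xX.
      case: (h_SD i w'' w' w Ew'w'' Eww' n2 w'w n1).
      * by rewrite hE2 setUC.
      * by rewrite hEww' setUC.
      move=> _ [_ [_ [F [g1 g2]]]].
      exists F; split; first by rewrite g1 -/X X1.
      split => //.
      apply: (trans_lem hES hb hs n2 w'w n1 (eab := Ew'w'') (ebc := Eww') (eT := ET)) => //.
      * by rewrite hE2 setUC.
      * by rewrite hEww' setUC.
      * by rewrite hEwwpp setUC.
      * by rewrite hET; bset w w' w''.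
      * by left.
    + exfalso; case/set0Pn: Xn => x xX.
      have := subsetP Xs x xX; rewrite !inE; case/orP => /eqP xw.
      * by move: h1; rewrite -xw xX.
      * by move: h2; rewrite -xw xX.
pose G i := proj1_sig (constructive_indefinite_description _ (hG i)).
have GP : forall i, Good i (G i) by move=> i; exact: proj2_sig.
pose Phi' := fun i => G i i.
have hP' : forall i e, models (B (nab [:: i] Phi' e)) = models (B (nab [:: i] (G i) e)).
  move=> i e; case: h_basic => _ [h2 _].
  by apply: h2 (soc1 lt i) (soc1 lt i) _ _.
have g1 : models (B (nab N Phi' Eww')) = [set w].
  have L : entails (FAnd (B (nab N Phi' Eww')) (B Ew')) FBot.
    apply: hloc.
    - move=> i iD; apply/entails0; rewrite models_FAnd hP'.
      by case: (GP i) => _ [_ ->]; rewrite iD hEw' disj1.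
    - move=> j jN jD; rewrite /Defs.equiv hP'.
      by case: (GP j) => _ [_ ->]; rewrite (negbTE jD) hEw'.
    - rewrite /consistent; move/entails0/eqP; apply/negP/set0Pn; exists w.
      rewrite inE eval_bigAnd all_map; apply/allP => i iD; rewrite /preim /=.
      have : w \in models (B (nab [:: i] Phi' Eww')).
        by rewrite hP'; case: (GP i) => _ [_ ->]; rewrite iD inE.
      by rewrite inE.
  move/entails0: L; rewrite models_FAnd hEw' => H.
  apply: sub1_eq (ne0 hES _) _; apply/subsetP => x xR.
  have := subsetP (subres hb hN _ _) x xR; rewrite hEww' !inE; case/orP => // /eqP xw'.
  by move: H => /setP /(_ x); rewrite in_setI xR xw' in_set1 eqxx in_set0.
have g2 : models (B (nab N Phi' Ewwpp)) = [set w''].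
  have L : entails (FAnd (B (nab N Phi' Ewwpp)) (B Ew)) FBot.
    apply: (h_P N Phi' Ewwpp Ew hN).
    - rewrite /consistent; move/entails0/eqP; apply/negP/set0Pn; exists w''.
      rewrite inE eval_bigAnd all_map; apply/allP => i iN; rewrite /preim /=.
      have : w'' \in models (B (nab [:: i] Phi' Ewwpp)).
        by rewrite hP'; case: (GP i) => _ [-> _]; rewrite inE.
      by rewrite inE.
    - move=> i iN; apply/entails0; rewrite models_FAnd hP'.
      by case: (GP i) => _ [-> _]; rewrite hEw disj1.
  move/entails0: L; rewrite models_FAnd hEw => H.
  apply: sub1_eq (ne0 hES _) _; apply/subsetP => x xR.
  have := subsetP (subres hb hN _ _) x xR; rewrite hEwwpp !inE; case/orP => // /eqP xw.
  by move: H => /setP /(_ x); rewrite in_setI xR xw in_set1 eqxx in_set0.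
have g3 : models (B (nab N Phi' Ew'w'')) = [set w''].
  apply: (trans_lem hES hb hN n1 hww' n2 (eab := Ewwpp) (ebc := Eww') (eT := ET)) => //.
  + by rewrite hEwwpp setUC.
  + by rewrite hE2 setUC.
  + by rewrite hET; bset w w' w''.
  + by left.
have EQ : models (B (nab N Phi Ew'w'')) = models (B (nab N Phi' Ew'w'')).
  apply: (h_I N Phi Phi' Ew'w'' hN) => e' He' j jN.
  apply: (determ hES hb (soc1 lt j) w'w'' hE2 _ He').
  by rewrite hP'; case: (GP j) => -> _.
by apply/entails0; rewrite models_FAnd EQ g3 hEw' disj1.
Qed.
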